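(* Let $|\Psi\rangle$ be a normalized state of $N$ qubits given by an open matrix-product state (MPS) in canonical Vidal form $\{\Gamma^{[i]},\Lambda^{[j]}\}$ (as described in the context). Fix a positive integer $\chi'$, and let $|\tilde{\Psi}_{T}\rangle$ be the parallel-compressed MPS obtained by inserting the projector $P_i$ on every bond $i=1,\dots,N-1$. Let $\epsilon(\chi')=\sum_{i=1}^{N-1}\epsilon_i(\chi')$ with $\epsilon_i(\chi')=\sum_{\alpha>\chi'}(\Lambda^{[i]}_{\alpha\alpha})^2$. Then the norm $n=\big\||\tilde{\Psi}_{T}\rangle\big\|$ satisfies $$1-\sqrt{2\epsilon(\chi')}\;\le\; n\;\le\;1.$$
   Context: An open MPS in Vidal form on $N$ sites with local dimension $d$ (here $d=2$) consists of rank-3 tensors $\Gamma^{[i]\sigma_i}$ ($i=1,\dots,N$, $\sigma_i\in\{0,\dots,d-1\}$), each a $\chi_{i-1}\times\chi_i$ matrix for fixed $\sigma_i$, and real diagonal matrices $\Lambda^{[i]}$ of size $\chi_i\times\chi_i$ ($i=0,\dots,N$) with nonnegative diagonal entries in descending order, where $\chi_0=\chi_N=1$ and $\Lambda^{[0]}=\Lambda^{[N]}=(1)$. It represents $|\Psi\rangle=\sum_{\sigma_1,\dots,\sigma_N}\mathrm{Tr}(\Lambda^{[0]}\Gamma^{[1]\sigma_1}\Lambda^{[1]}\Gamma^{[2]\sigma_2}\cdots\Lambda^{[N-1]}\Gamma^{[N]\sigma_N}\Lambda^{[N]})\,|\sigma_1\cdots\sigma_N\rangle$. It is in canonical form if for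 every $i=1,\dots,N$, with $A^{[i]\sigma_i}=\Lambda^{[i-1]}\Gamma^{[i]\sigma_i}$ and $B^{[i]\sigma_i}=\Gamma^{[i]\sigma_i}\Lambda^{[i]}$, one has $\sum_{\sigma_i}(A^{[i]\sigma_i})^\dagger A^{[i]\sigma_i}=I_{\chi_i}$ and $\sum_{\sigma_i}B^{[i]\sigma_i}(B^{[i]\sigma_i})^\dagger=I_{\chi_{i-1}}$. For a normalized canonical MPS, $\sum_\alpha(\Lambda^{[i]}_{\alpha\alpha})^2=1$ for each $i$. For each bond $i\in\{1,\dots,N-1\}$, $P_i=\sum_{\alpha=1}^{\min(\chi',\chi_i)}|\alpha\rangle\langle\alpha|$ is the projector onto the first $\chi'$ standard basis vectors of the $\chi_i$-dimensional bond space (those corresponding to the largest diagonal entries of $\Lambda^{[i]}$). The parallel-compressed state is $|\tilde{\Psi}_{T}\rangle=\sum_{\sigma}\mathrm{Tr}(\Lambda^{[0]}\Gamma^{[1]\sigma_1}P_1\Lambda^{[1]}\Gamma^{[2]\sigma_2}P_2\Lambda^{[2]}\cdots P_{N-1}\Lambda^{[N-1]}\Gamma^{[N]\sigma_N}\Lambda^{[N]})|\sigma_1\cdots\sigma_N\rangle$ (not renormalized). Sums $\sum_{\alpha>\chi'}$ over an empty range are zero. *)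

(* Defs.v *)
From HB Require Import structures.
From mathcomp Require Import all_boot all_order all_algebra.
Unset Printing Implicit Defensive.
Import Order.TTheory GRing.Theory Num.Theory.
Local Open Scope ring_scope.

Section MPS.
Variable C : numClosedFieldType.
Variable chi : nat -> nat.

(* Paper's site i (1 <= i <= N) is our index i-1 : Gam (i-1) sigma is the
   chi_{i-1} x chi_i matrix Gamma^{[i] sigma}. *)
Variable Gam : forall k : nat, 'I_2 -> 'M[C]_(chi k, chi k.+1).
Variable lam : forall j : nat, 'I_(chi j) -> C.

Definition Lam (t : nat) : 'M[C]_(chi t) := diag_mx (\row_(a < chi t) lam t a).

Definition adjmx {m n : nat} (A : 'M[C]_(m, n)) : 'M[C]_(n, m) :=
  (map_mx (fun x => x^*) A)^T.

Fixpoint mps_chain (Q : forall j : nat, 'M[C]_(chi j)) (s : nat -> 'I_2) (k : nat)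
  : 'M[C]_(chi 0, chi k) :=
  match k return 'M[C]_(chi 0, chi k) with
  | 0 => Lam 0
  | k'.+1 => mps_chain Q s k' *m Gam k' (s k') *m Q k'.+1 *m Lam k'.+1
  end.

Variable N : nat.

(* the configuration sigma as a function of the (0-based) site index *)
Definition sel (sg : {ffun 'I_N -> 'I_2}) (k : nat) : 'I_2 :=
  if (insub k : option 'I_N) is Some i then sg i else ord0.

(* amplitude: the (unique, since chi_0 = chi_N = 1) entry = trace of the
   1 x 1 product matrix *)
Definition mps_amp (Q : forall j : nat, 'M[C]_(chi j)) (sg : {ffun 'I_N -> 'I_2}) : C :=
  \sum_(a < chi 0) \sum_(b < chi N) mps_chain Q (sel sg) N a b.

Definition state_norm (Q : forall j : nat, 'M[C]_(chi j)) : C :=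
  sqrtC (\sum_(sg : {ffun 'I_N -> 'I_2}) `|mps_amp Q sg| ^+ 2).

(* no insertion: the original state |Psi> *)
Definition noQ : forall j : nat, 'M[C]_(chi j) := fun j => 1%:M.

Definition projQ (chi' : nat) : forall j : nat, 'M[C]_(chi j) :=
  fun j => if (0 < j < N)%N then pid_mx chi' else 1%:M.

Definition eps_i (chi' : nat) (i : nat) : C :=
  \sum_(a < chi i | (chi' <= a)%N) lam i a ^+ 2.

Definition eps (chi' : nat) : C := \sum_(1 <= i < N) eps_i chi' i.

Definition canonical : Prop :=
  forall k : nat, (k < N)%N ->
    (\sum_(s < 2) adjmx (Lam k *m Gam k s) *m (Lam k *m Gam k s) = 1%:M) /\
    (\sum_(s < 2) (Gam k s *m Lam k.+1) *m adjmx (Gam k s *m Lam k.+1) = 1%:M).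

Definition lambda_ok : Prop :=
  (forall j : nat, (j <= N)%N -> forall a : 'I_(chi j), 0 <= lam j a) /\
  (forall j : nat, (j <= N)%N -> forall a b : 'I_(chi j), (a <= b)%N -> lam j b <= lam j a) /\
  (forall a : 'I_(chi 0), lam 0 a = 1) /\
  (forall a : 'I_(chi N), lam N a = 1).

End MPS.

(* Main.v *)
Require Import Defs.
From HB Require Import structures.
From mathcomp Require Import all_boot all_order all_algebra ring.
Import Order.TTheory GRing.Theory Num.Theory.
Local Open Scope ring_scope.

Section Basics.
Variable C : numClosedFieldType.

Notation adj := (@adjmx C _ _).

Lemma adjE m n (A : 'M[C]_(m, n)) i j : adj A i j = (A j i)^*.
Proof. by rewrite /adjmx !mxE. Qed.

Lemma adjmx_mul m n p (A : 'M[C]_(m, n)) (B : 'M[C]_(n, p)) :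
  adj (A *m B) = adj B *m adj A.
Proof.
apply/matrixP=> i j; rewrite !mxE rmorph_sum; apply: eq_bigr => k _.
by rewrite !adjE rmorphM mulrC.
Qed.

Lemma adjmxB m n (A B : 'M[C]_(m, n)) : adj (A - B) = adj A - adj B.
Proof. by apply/matrixP=> i j; rewrite !mxE rmorphB. Qed.

Lemma adjmx_sum m n (F : 'I_2 -> 'M[C]_(m, n)) :
  adj (\sum_b F b) = \sum_b adj (F b).
Proof. by apply/matrixP=> i j; rewrite adjE !summxE rmorph_sum; apply: eq_bigr=> b _; rewrite adjE. Qed.

Definition qf n (u : 'cV[C]_n) (M : 'M[C]_n) (w : 'cV[C]_n) : C :=
  (adj u *m M *m w) 0 0.
Arguments qf {n}.

Lemma qf_sum n u (M : 'I_2 -> 'M[C]_n) w : qf u (\sum_b M b) w = \sum_b qf u (M b) w.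
Proof. by rewrite /qf mulmx_sumr mulmx_suml summxE. Qed.

Lemma qf_mul m n (u : 'cV[C]_m) (X : 'M[C]_(n, m)) M (Y : 'M[C]_(n, m)) w :
  qf u (adj X *m M *m Y) w = qf (X *m u) M (Y *m w).
Proof. by rewrite /qf adjmx_mul !mulmxA. Qed.

Lemma qf_ge0 n (z : 'cV[C]_n) : 0 <= qf z 1%:M z.
Proof.
rewrite /qf mulmx1 mxE; apply: sumr_ge0 => i _.
by rewrite adjE mulrC mul_conjC_ge0.
Qed.

Lemma qf_diff n (u w : 'cV[C]_n) M :
  qf (u - w) M (u - w) = qf u M u - qf u M w - qf w M u + qf w M w.
Proof.
rewrite /qf adjmxB mulmxBl mulmxBl !mulmxBr !mxE.
by ring.
Qed.



Lemma adj_delta n (a : 'I_n) : adj (delta_mx a (0 : 'I_1)) = delta_mx 0 a.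
Proof. by apply/matrixP=> i j; rewrite adjE !mxE rmorph_nat andbC. Qed.

Lemma qf_delta n (a : 'I_n) M : qf (delta_mx a 0) M (delta_mx a 0) = M a a.
Proof. by rewrite /qf adj_delta -rowE -colE !mxE. Qed.

Lemma diag_comm n (a b : 'rV[C]_n) : diag_mx a *m diag_mx b = diag_mx b *m diag_mx a.
Proof.
rewrite !mul_diag_mx; apply/matrixP=> i j; rewrite !mxE.
rewrite !mulrnAr mulrC; done.
Qed.

Lemma adj_diag n (d : 'rV[C]_n) : (forall i, (d 0 i)^* = d 0 i) -> adj (diag_mx d) = diag_mx d.
Proof.
move=> Hd; apply/matrixP=> i j; rewrite adjE !mxE.
case: (eqVneq i j) => [->|ne]; first by rewrite ?eqxx !mulr1n Hd.
by rewrite ?eq_sym ?(negbTE ne) !mulr0n rmorph0.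
Qed.

Lemma adj_diag_mul_diag n (d : 'rV[C]_n) a : (adj (diag_mx d) *m diag_mx d) a a = (d 0 a)^* * d 0 a.
Proof. by rewrite mul_mx_diag !mxE ?eqxx mulr1n. Qed.

Lemma qf1E n (v : 'cV[C]_n) : qf v 1%:M v = \sum_i (v i 0)^* * v i 0.
Proof. by rewrite /qf mulmx1 mxE; apply: eq_bigr => i _; rewrite adjE. Qed.

Lemma proj_le n (d : 'rV[C]_n) (z : 'cV[C]_n) : (forall i, d 0 i = 0 \/ d 0 i = 1) ->
  qf (diag_mx d *m z) 1%:M (diag_mx d *m z) <= qf z 1%:M z.
Proof.
move=> Hd; rewrite !qf1E; apply: ler_sum => i _.
rewrite mul_diag_mx !mxE.
case: (Hd i) => ->; last by rewrite mul1r.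
by rewrite mul0r rmorph0 mul0r mulrC mul_conjC_ge0.
Qed.

End Basics.
Arguments qf {C n}.

Section MPSproof.
Variable C : numClosedFieldType.
Variable chi : nat -> nat.
Variable Gam : forall k : nat, 'I_2 -> 'M[C]_(chi k, chi k.+1).
Variable lam : forall j : nat, 'I_(chi j) -> C.
Variable N : nat.

Notation adj := (@adjmx C _ _).
Notation Lm k := (Lam C chi lam k).
Notation fam := (forall j : nat, 'M[C]_(chi j)).

Definition Xm (Q : fam) k b : 'M[C]_(chi k, chi k.+1) := Gam k b *m Q k.+1 *m Lm k.+1.

Fixpoint Fh (Q Q' : fam) k : 'M[C]_(chi k) :=
  match k return 'M[C]_(chi k) with
  | 0 => adj (Lm 0) *m Lm 0
  | k'.+1 => \sum_(b < 2) adj (Xm Q k' b) *m Fh Q Q' k' *m Xm Q' k' b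
  end.


Lemma qf_FhS Q Q' k (u w : 'cV[C]_(chi k.+1)) :
  qf u (Fh Q Q' k.+1) w = \sum_b qf (Xm Q k b *m u) (Fh Q Q' k) (Xm Q' k b *m w).
Proof. by rewrite /= qf_sum; apply: eq_bigr => b _; rewrite qf_mul. Qed.

Lemma block_inv Q Q' k (u w : 'cV[C]_(chi k)) :
  0 <= qf u (Fh Q Q k) u - qf u (Fh Q Q' k) w - qf w (Fh Q' Q k) u + qf w (Fh Q' Q' k) w.
Proof.
elim: k u w => [|k IH] u w.
  rewrite /= -qf_diff -[adj (Lm 0)]mulmx1 qf_mul; exact: qf_ge0.
rewrite !qf_FhS -!sumrB -big_split /=; apply: sumr_ge0 => b _; exact: IH.
Qed.

Definition lcan k := \sum_(s < 2) adj (Lm k *m Gam k s) *m (Lm k *m Gam k s) = 1%:M.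
Definition rcan k := \sum_(s < 2) (Gam k s *m Lm k.+1) *m adj (Gam k s *m Lm k.+1) = 1%:M.

Lemma noQ_X k b : Xm (noQ C chi) k b = Gam k b *m Lm k.+1.
Proof. by rewrite /Xm /noQ mulmx1. Qed.

Lemma FII k : (forall j, (j < k)%N -> lcan j) ->
  Fh (noQ C chi) (noQ C chi) k = adj (Lm k) *m Lm k.
Proof.
elim: k => [|k IH] Hc //=.
rewrite IH; last by move=> j Hj; apply: Hc; exact: ltnW.
have Hk := Hc k (ltnSn k); rewrite /lcan in Hk.
transitivity (adj (Lm k.+1) *m (\sum_(s < 2) adj (Lm k *m Gam k s) *m (Lm k *m Gam k s)) *m Lm k.+1); last by rewrite Hk mulmx1.
rewrite mulmx_sumr mulmx_suml; apply: eq_bigr => b _.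
by rewrite noQ_X !adjmx_mul !mulmxA.
Qed.



Lemma qf_adjsq n m (X : 'M[C]_(n, m)) (u : 'cV[C]_m) w : qf u (adj X *m X) w = qf (X *m u) 1%:M (X *m w).
Proof. by rewrite -qf_mul mulmx1. Qed.

Lemma PPle Q (d : forall j, 'rV[C]_(chi j)) k :
  (forall j, Q j = diag_mx (d j)) -> (forall j i, d j 0 i = 0 \/ d j 0 i = 1) ->
  (forall j, (j < k)%N -> lcan j) ->
  forall u, qf u (Fh Q Q k) u <= qf u (adj (Lm k) *m Lm k) u.
Proof.
move=> HQ Hd; elim: k => [|k IH] Hc u /=; first by [].
rewrite -/(Fh Q Q k.+1) qf_FhS.
have IH' : forall j, (j < k)%N -> lcan j by move=> j Hj; apply: Hc; exact: ltnW.
apply: le_trans (_ : \sum_b qf (Xm Q k b *m u) (adj (Lm k) *m Lm k) (Xm Q k b *m u) <= _).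
  by apply: ler_sum => b _; apply: IH.
set v := Q k.+1 *m (Lm k.+1 *m u).
have Hk := Hc k (ltnSn k); rewrite /lcan in Hk.
have -> : \sum_b qf (Xm Q k b *m u) (adj (Lm k) *m Lm k) (Xm Q k b *m u) = qf v 1%:M v.
  rewrite -Hk qf_sum; apply: eq_bigr => b _.
  rewrite !qf_adjsq /Xm /v !mulmxA; done.
rewrite qf_adjsq /v HQ; apply: proj_le; exact: Hd.
Qed.



Lemma diagLam j (e : 'rV[C]_(chi j)) : diag_mx e *m Lm j = Lm j *m diag_mx e.
Proof. by rewrite /Lam diag_comm. Qed.

Definition rr Q k := \tr (Fh (noQ C chi) Q k) + \tr (Fh Q (noQ C chi) k).
Definition defect (d : forall j, 'rV[C]_(chi j)) j :=
  \sum_a (1 - d j 0 a) * (adj (Lm j) *m Lm j) a a.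

Lemma sum_lcan k (v : 'cV[C]_(chi k.+1)) : lcan k ->
  \sum_b qf (Gam k b *m Lm k.+1 *m v) (adj (Lm k) *m Lm k) (Gam k b *m Lm k.+1 *m v)
  = qf v (adj (Lm k.+1) *m Lm k.+1) v.
Proof.
move=> Hk; rewrite /lcan in Hk.
rewrite [RHS]qf_adjsq -Hk qf_sum.
apply: eq_bigr => b _; rewrite !qf_adjsq !mulmxA; done.
Qed.

Lemma trace_step Q (d : forall j, 'rV[C]_(chi j)) k :
  (forall j, Q j = diag_mx (d j)) -> (forall j i, d j 0 i = 0 \/ d j 0 i = 1) ->
  (forall j, (j <= k)%N -> lcan j) -> rcan k ->
  rr Q k <= rr Q k.+1 + 2%:R * defect d k.+1.
Proof.
move=> HQ Hd Hc Hr.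
have Hc' : forall j, (j < k)%N -> lcan j by move=> j Hj; apply: Hc; exact: ltnW.
pose X b := Gam k b *m Lm k.+1.
pose D := diag_mx (d k.+1).
pose FIQ := Fh (noQ C chi) Q k. pose FQI := Fh Q (noQ C chi) k.
pose Y := \sum_b adj (X b) *m FIQ *m X b.
pose Y' := \sum_b adj (X b) *m FQI *m X b.
have HXQ b : Xm Q k b = X b *m D.
  by rewrite /Xm HQ -mulmxA diagLam mulmxA.
have HD : adj D = D.
  by apply: adj_diag => i; case: (Hd k.+1 i) => ->; rewrite ?rmorph0 ?rmorph1.
have E1 : Fh (noQ C chi) Q k.+1 = Y *m D.
  rewrite /= mulmx_suml; apply: eq_bigr => b _.
  by rewrite noQ_X HXQ !mulmxA.
have E2 : Fh Q (noQ C chi) k.+1 = D *m Y'.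
  rewrite /= mulmx_sumr; apply: eq_bigr => b _.
  by rewrite noQ_X HXQ adjmx_mul HD !mulmxA.
have Tr F : \tr (\sum_b adj (X b) *m F *m X b) = \tr F.
  transitivity (\tr ((\sum_b X b *m adj (X b)) *m F)); last by rewrite Hr mul1mx.
  rewrite mulmx_suml !linear_sum; apply: eq_bigr => b _.
  by rewrite /= mxtrace_mulC !mulmxA.
have Bnd a : Y a a + Y' a a <= 2%:R * (adj (Lm k.+1) *m Lm k.+1) a a.
  rewrite -!qf_delta !qf_sum -big_split -sum_lcan; last exact: Hc.
  rewrite mulr_sumr; apply: ler_sum => b _.
  rewrite !qf_mul.
  set u := X b *m delta_mx a 0.
  have := block_inv (noQ C chi) Q k u u.
  rewrite FII // -/FIQ -/FQI => H.
  have HP := PPle Q d k HQ Hd Hc' u.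
  have H2 : qf u FIQ u + qf u FQI u <= qf u (adj (Lm k) *m Lm k) u + qf u (Fh Q Q k) u.
    rewrite -subr_ge0; move: H.
    have -> : forall A B C0 D0 : C, A - B - C0 + D0 = A + D0 - (B + C0) by move=> *; ring.
    done.
  apply: le_trans H2 _.
  rewrite mulr_natl mulr2n; exact: lerD.
rewrite /rr E1 E2 [\tr (D *m Y')]mxtrace_mulC -/FIQ -/FQI -(Tr FIQ) -(Tr FQI) -/Y -/Y'.
rewrite !mul_mx_diag /mxtrace /defect mulr_sumr -!big_split /=.
apply: ler_sum => a _; move: (Bnd a); rewrite !mxE.
case: (Hd k.+1 a) => ->.
  by rewrite !mulr0 !add0r subr0 mul1r.
by rewrite subrr mul0r mulr0 addr0 !mulr1.
Qed.



Lemma trace_iter Q (d : forall j, 'rV[C]_(chi j)) k :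
  (forall j, Q j = diag_mx (d j)) -> (forall j i, d j 0 i = 0 \/ d j 0 i = 1) ->
  (forall j, (j < k)%N -> lcan j /\ rcan j) ->
  rr Q 0 <= rr Q k + 2%:R * \sum_(j < k) defect d j.+1.
Proof.
move=> HQ Hd; elim: k => [|k IH] Hc.
  by rewrite big_ord0 mulr0 addr0.
apply: le_trans (IH _) _; first by move=> j Hj; apply: Hc; exact: ltnW.
rewrite big_ord_recr /= mulrDr [_ + 2%:R * defect d _]addrC addrA lerD2r.
apply: trace_step HQ Hd _ _.
  by move=> j Hj; apply: (Hc j _).1.
exact: (Hc k (ltnSn k)).2.
Qed.

Notation chain Q s k := (mps_chain C chi Gam lam Q s k).

Lemma chain_ext Q s s' k : (forall j, (j < k)%N -> s j = s' j) -> chain Q s k = chain Q s' k.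
Proof.
elim: k => //= k IH H; rewrite IH ?H //; move=> j Hj; apply: H; exact: ltnW.
Qed.

Definition flip (i : 'I_N) (sg : {ffun 'I_N -> 'I_2}) : {ffun 'I_N -> 'I_2} :=
  [ffun j => if j == i then rev_ord (sg j) else sg j].

Lemma flipK i : involutive (flip i).
Proof.
move=> sg; apply/ffunP => j; rewrite !ffunE; case: eqP => // _; exact: rev_ordK.
Qed.

Lemma flip_sum (V : zmodType) i (H : 'I_2 -> {ffun 'I_N -> 'I_2} -> V) :
  (forall b sg, H b (flip i sg) = H b sg) ->
  (\sum_(sg : {ffun 'I_N -> 'I_2}) H (sg i) sg) *+ 2 = \sum_(sg : {ffun 'I_N -> 'I_2}) \sum_b H b sg.
Proof.
move=> HH; rewrite mulr2n {2}(reindex_inj (can_inj (flipK i))) /= -big_split.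
apply: eq_bigr => sg _; rewrite HH ffunE eqxx big_ord_recl big_ord1.
have [->|->] : sg i = ord0 \/ sg i = ord_max.
  case: (sg i) => [[|[|m]]] Hm; [left|right|by []]; exact: val_inj.
  have -> : rev_ord (ord0 : 'I_2) = lift ord0 ord0 by exact: val_inj.
  by [].
have -> : rev_ord (ord_max : 'I_2) = ord0 by exact: val_inj.
have -> : (ord_max : 'I_2) = lift ord0 ord0 by exact: val_inj.
by rewrite addrC.
Qed.

Lemma mulmxMnr m n p (A : 'M[C]_(m, n)) (B : 'M[C]_(n, p)) t : A *m (B *+ t) = (A *m B) *+ t.
Proof. by elim: t => [|t IH]; rewrite ?mulr0n ?mulmx0 // !mulrS mulmxDr IH. Qed.
Lemma mulmxMnl m n p (A : 'M[C]_(m, n)) (B : 'M[C]_(n, p)) t : (A *+ t) *m B = (A *m B) *+ t.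
Proof. by elim: t => [|t IH]; rewrite ?mulr0n ?mul0mx // !mulrS mulmxDl IH. Qed.

Definition G Q Q' k := \sum_(sg : {ffun 'I_N -> 'I_2})
  adj (chain Q (sel N sg) k) *m chain Q' (sel N sg) k.

Lemma G_step Q Q' k : (k < N)%N ->
  G Q Q' k.+1 *+ 2 = \sum_b adj (Xm Q k b) *m G Q Q' k *m Xm Q' k b.
Proof.
move=> Hk; pose i := Ordinal Hk.
have Hsel sg : sel N sg k = sg i by rewrite /sel insubT.
have Hfl sg j : (j < k)%N -> sel N (flip i sg) j = sel N sg j.
  move=> Hj; rewrite /sel; case: insubP => // j' _ Hj'; rewrite ffunE.
  case: eqP => // Hji; exfalso; move: Hj; rewrite -Hj' Hji /= ltnn //.
pose H b sg := adj (chain Q (sel N sg) k *m Xm Q k b) *m (chain Q' (sel N sg) k *m Xm Q' k b).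
transitivity ((\sum_(sg : {ffun 'I_N -> 'I_2}) H (sg i) sg) *+ 2).
  congr (_ *+ 2); apply: eq_bigr => sg _; rewrite /H /= Hsel /Xm !mulmxA //.
rewrite flip_sum.
  rewrite exchange_big /=; apply: eq_bigr => b _.
  rewrite /G mulmx_sumr mulmx_suml; apply: eq_bigr => sg _.
  by rewrite /H adjmx_mul !mulmxA.
move=> b sg; by rewrite /H (chain_ext Q _ _ k (Hfl sg)) (chain_ext Q' _ _ k (Hfl sg)).
Qed.

Lemma G_scaled Q Q' k : (k <= N)%N -> G Q Q' k *+ 2 ^ k = Fh Q Q' k *+ 2 ^ N.
Proof.
elim: k => [|k IH] Hk.
  by rewrite /G /= sumr_const card_ffun !card_ord.
rewrite expnS mulrnA G_step // -sumrMnl /=.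
rewrite -sumrMnl; apply: eq_bigr => b _.
by rewrite -mulmxMnl -mulmxMnr IH ?(ltnW Hk) // mulmxMnr mulmxMnl.
Qed.



Lemma one_sum (V : nmodType) n (h : n = 1%N) (x : 'I_n) (F : 'I_n -> V) :
  \sum_i F i = F x.
Proof.
rewrite (big_pred1 x) // => i /=; apply/esym/eqP/val_inj.
move: (ltn_ord i) (ltn_ord x); rewrite /=; move: (nat_of_ord i) (nat_of_ord x) => a b.
by rewrite h; case: a => [|a] //; case: b.
Qed.

Arguments one_sum {V n} h x {F}.

Lemma GN_Fh Q Q' : G Q Q' N = Fh Q Q' N.
Proof.
have := G_scaled Q Q' N (leqnn N) => H; apply/matrixP => a b.
move/matrixP: H => /(_ a b); rewrite !mulmxnE.
move: (G Q Q' N a b) (Fh Q Q' N a b) => x y.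
rewrite -[x *+ _]mulr_natr -[y *+ _]mulr_natr => /mulIf; apply.
by rewrite pnatr_eq0 expn_eq0.
Qed.

Lemma inner Q Q' (h0 : chi 0 = 1%N) (hN : chi N = 1%N) (z0 : 'I_(chi 0)) (zN : 'I_(chi N)) :
  \sum_(sg : {ffun 'I_N -> 'I_2}) (mps_amp C chi Gam lam N Q sg)^* * mps_amp C chi Gam lam N Q' sg
  = Fh Q Q' N zN zN.
Proof.
rewrite -GN_Fh /G summxE; apply: eq_bigr => sg _.
rewrite mxE (one_sum h0 z0) adjE /mps_amp (one_sum h0 z0) (one_sum hN zN).
by rewrite (one_sum h0 z0) (one_sum hN zN).
Qed.

End MPSproof.
Arguments one_sum {V n} h x {F}.

Lemma shift_sum (C : numClosedFieldType) n (f : nat -> C) :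
  \sum_(j < n) (if (j.+1 < n)%N then f j.+1 else 0) = \sum_(1 <= i < n) f i.
Proof.
case: n => [|n]; first by rewrite big_ord0 big_geq.
rewrite big_ord_recr /= ltnn addr0 big_add1 /= big_mkord; apply: eq_bigr => i _.
by rewrite ltnS ltn_ord.
Qed.

Theorem lemma2 (C : numClosedFieldType) (N : nat) (chi : nat -> nat)
  (Gam : forall k : nat, 'I_2 -> 'M[C]_(chi k, chi k.+1))
  (lam : forall j : nat, 'I_(chi j) -> C) (chi' : nat) :
  chi 0%N = 1%N -> chi N = 1%N ->
  lambda_ok C chi lam N ->
  canonical C chi Gam lam N ->
  state_norm C chi Gam lam N (noQ C chi) = 1 ->
  (0 < chi')%N ->
  1 - sqrtC (2 * eps C chi lam N chi') <= state_norm C chi Gam lam N (projQ C chi N chi') /\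
  state_norm C chi Gam lam N (projQ C chi N chi') <= 1.
Proof.
move=> h0 hN [Hpos [_ [H0 HN]]] Hcan Hnorm Hchi'.
pose z0 := cast_ord (esym h0) (ord0 : 'I_1).
pose zN := cast_ord (esym hN) (ord0 : 'I_1).
pose dI j : 'rV[C]_(chi j) := const_mx 1.
pose dP j : 'rV[C]_(chi j) := if (0 < j < N)%N then \row_(i < chi j) ((i < chi')%N)%:R else const_mx 1.
have HQI j : noQ C chi j = diag_mx (dI j) by rewrite diag_const_mx.
have HQP j : projQ C chi N chi' j = diag_mx (dP j).
  rewrite /projQ /dP; case: ifP => _; last by rewrite diag_const_mx.
  apply/matrixP => a b; rewrite !mxE.
  case: (eqVneq a b) => [->|ne]; first by rewrite !eqxx mulr1n.
  have -> : (nat_of_ord a == nat_of_ord b) = false by apply/negbTE; exact: ne.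
  by rewrite mulr0n.
have HdP j i : dP j 0 i = 0 \/ dP j 0 i = 1.
  rewrite /dP; case: ifP => _; rewrite !mxE; last by right.
  by case: (i < chi')%N; [right|left].
have Hl j : (j < N)%N -> lcan C chi Gam lam j by move=> Hj; exact: (Hcan j Hj).1.
have Hc j : (j < N)%N -> lcan C chi Gam lam j /\ rcan C chi Gam lam j by move=> Hj; exact: (Hcan j Hj).
set I := noQ C chi. set P := projQ C chi N chi'.
set amp := mps_amp C chi Gam lam N.
set F := Fh C chi Gam lam.
have Inn Q Q' : \sum_(sg : {ffun 'I_N -> 'I_2}) (amp Q sg)^* * amp Q' sg = F Q Q' N zN zN.
  exact: inner.
set SB := \sum_(sg : {ffun 'I_N -> 'I_2}) `|amp P sg| ^+ 2.
have ESB : SB = F P P N zN zN.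
  by rewrite -Inn; apply: eq_bigr => sg _; rewrite normCK mulrC.
have SA1 : \sum_(sg : {ffun 'I_N -> 'I_2}) `|amp I sg| ^+ 2 = 1.
  by move: Hnorm; rewrite /state_norm => H; rewrite -(sqrtCK (\sum_sg _)) H expr1n.
have SB1 : SB <= 1.
  have := PPle C chi Gam lam P dP N HQP HdP Hl (delta_mx zN 0).
  by rewrite !qf_delta /Lam adj_diag_mul_diag mxE HN conjC1 mulr1 -ESB.
have T := trace_iter C chi Gam lam P dP N HQP HdP Hc.
have R0 : rr C chi Gam lam P 0 = 2%:R.
  rewrite /rr /= /mxtrace !(one_sum h0 z0) /Lam adj_diag_mul_diag mxE H0 conjC1 mulr1.
  by rewrite -mulr2n.
have RN : rr C chi Gam lam P N = F I P N zN zN + F P I N zN zN.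
  by rewrite /rr /mxtrace !(one_sum hN zN).
have Dterm (j : 'I_N) : defect C chi lam dP j.+1 =
    if (j.+1 < N)%N then eps_i C chi lam chi' j.+1 else 0.
  rewrite /defect /dP; have -> : (0 < j.+1 < N)%N = (j.+1 < N)%N by [].
  case: ifP => Hj.
    rewrite /eps_i [RHS]big_mkcond /=; apply: eq_bigr => a _.
    rewrite /Lam adj_diag_mul_diag !mxE.
    case: (ltnP a chi') => Ha /=.
      by rewrite subrr mul0r.
    rewrite subr0 mul1r geC0_conj ?expr2 //; apply: Hpos; exact: ltnW.
  by apply: big1 => a _; rewrite mxE subrr mul0r.
have DE : \sum_(j < N) defect C chi lam dP j.+1 = eps C chi lam N chi'.
  rewrite /eps -shift_sum; apply: eq_bigr => j _; exact: Dterm.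
have Dge0 j : 0 <= defect C chi lam dP j.
  apply: sumr_ge0 => a _; rewrite /Lam adj_diag_mul_diag.
  case: (HdP j a) => ->; last by rewrite subrr mul0r.
  by rewrite subr0 mul1r mulrC mul_conjC_ge0.
set e := eps C chi lam N chi'.
have e0 : 0 <= e by rewrite /e -DE; apply: sumr_ge0 => j _.
have Exp : \sum_(sg : {ffun 'I_N -> 'I_2}) `|amp I sg - amp P sg| ^+ 2
    = 1 + SB - (F I P N zN zN + F P I N zN zN).
  rewrite -SA1 -!Inn /SB -!big_split -sumrB /=; apply: eq_bigr => sg _.
  rewrite !normCK rmorphB /=; ring.
have XY : F I P N zN zN + F P I N zN zN <= 1 + SB.
  rewrite -subr_ge0 -Exp; apply: sumr_ge0 => sg _; apply: exprn_ge0; exact: normr_ge0.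
have K : 1 <= SB + 2%:R * e.
  move: T; rewrite R0 RN DE -/e => T.
  have : 1 + 1 <= 1 + (SB + 2%:R * e).
    apply: le_trans T _; rewrite addrA lerD2r; exact: XY.
  by rewrite lerD2l.
have SB0 : 0 <= SB by apply: sumr_ge0 => sg _; apply: exprn_ge0; exact: normr_ge0.
have -> : state_norm C chi Gam lam N P = sqrtC SB by [].
have n0 : 0 <= sqrtC SB by rewrite sqrtC_ge0.
have e20 : 0 <= 2%:R * e by apply: mulr_ge0 => //; exact: ler0n.
set s := sqrtC (2%:R * e).
have s0 : 0 <= s by rewrite sqrtC_ge0.
split; last first.
  apply: le_trans (_ : sqrtC SB <= sqrtC 1) _; last by rewrite sqrtC1.
  by rewrite ler_sqrtC // nnegrE // ler01.
case: (real_leP (ger0_real s0) (real1 C)) => Hs; last first.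
  apply: le_trans n0; rewrite subr_le0; exact: ltW.
rewrite -(ler_pXn2r (n:=2)) // ?nnegrE ?subr_ge0 // sqrtCK.
have ss : s * s <= s by apply: le_trans (_ : s * s <= s * 1) _; [exact: ler_wpM2l | rewrite mulr1].
have s2 : s ^+ 2 = 2%:R * e by rewrite sqrtCK.
have -> : (1 - s) ^+ 2 = (1 - s ^+ 2) - 2%:R * (s - s * s) by ring.
apply: le_trans (_ : 1 - s ^+ 2 <= SB).
  rewrite gerBl; apply: mulr_ge0; first exact: ler0n.
  by rewrite subr_ge0.
by rewrite lerBlDr s2.
Qed.
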